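(* Let $V_1,V_2,U,\tilde V_1,\tilde V_2,\tilde U\in\mathbb{R}[x]$ and $\alpha,\beta\in\mathbb{R}$ with $\alpha\ne0$, and let $m_1,m_2,\tilde m_1,\tilde m_2\ge3$ be integers with $\gcd(m_1,m_2)=1$ and $\gcd(\tilde m_1,\tilde m_2)=1$. Suppose that $$V_1\circ T_{m_1}+V_2\circ T_{m_2}=\tilde U\circ T_{\tilde m_1\tilde m_2}\circ(\alpha x+\beta)$$ and $$\tilde V_1\circ T_{\tilde m_1}\circ(\alpha x+\beta)+\tilde V_2\circ T_{\tilde m_2}\circ(\alpha x+\beta)=U\circ T_{m_1m_2},$$ where both sides of each equality are non-constant polynomials. Then $\alpha=\pm1$ and $\beta=0$.
   Context: $T_k$ denotes the Chebyshev polynomial of the first kind of degree $k$, $T_k(\cos\phi)=\cos(k\phi)$. $\circ$ denotes composition of polynomials. *)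

(* Defs.v *)
From HB Require Import structures.
From mathcomp Require Import all_boot all_order all_algebra.
Set Implicit Arguments. Unset Strict Implicit. Unset Printing Implicit Defensive.
Import Order.TTheory GRing.Theory Num.Theory.
Local Open Scope ring_scope.

Fixpoint cheb_pair (R : nzRingType) (n : nat) : {poly R} * {poly R} :=
  match n with
  | 0%N => (1, 'X)
  | n'.+1 => let (a, b) := cheb_pair R n' in (b, 2%:R *: 'X * b - a)
  end.

Definition cheb (R : nzRingType) (n : nat) : {poly R} := (cheb_pair R n).1.

Lemma cheb0 (R : nzRingType) : cheb R 0 = 1.
Proof. by []. Qed.

Lemma cheb1 (R : nzRingType) : cheb R 1 = 'X.
Proof. by []. Qed.

Lemma chebSS (R : nzRingType) n :
  cheb R n.+2 = 2%:R *: 'X * cheb R n.+1 - cheb R n.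
Proof. by rewrite /cheb /=; case: (cheb_pair R n). Qed.

(* Main.v *)
Require Import Defs.
Set Warnings "-notation-overridden,-ambiguous-paths,-deprecated".
From HB Require Import structures.
From mathcomp Require Import all_boot all_order all_algebra.
From mathcomp Require Import ring lra zify.
Import Order.TTheory GRing.Theory Num.Theory.
Local Open Scope ring_scope.
Lemma closeD m x y : (2 < m)%N -> (m %| x)%N -> (m %| y)%N -> (y < x)%N -> (x - y <= 2)%N -> False.
Proof.
move=> m2 hx hy yx d2; have := dvdn_sub hx hy => /dvdn_leq.
rewrite subn_gt0 yx => /(_ isT) H; lia.
Qed.

Lemma closeE m x y : (2 < m)%N -> m != 4%N -> (m %| x)%N -> (m %| y)%N -> (y < x)%N ->
  (x - y = 2 \/ x - y = 4)%N -> False.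
Proof.
move=> m2 m4 hx hy yx [] E; first by exact: (closeD _ _ _ m2 hx hy yx (eq_leq E)).
have := dvdn_sub hx hy; rewrite E => H4.
have mle := dvdn_leq (isT : (0 < 4)%N) H4.
have : m = 3%N \/ m = 4%N by lia.
case=> Em; first by rewrite Em in H4.
by rewrite Em eqxx in m4.
Qed.

Ltac ntsolve :=
  match goal with
  | Hm : is_true (2 < ?m)%N, H1 : is_true (?m %| ?x)%N, H2 : is_true (?m %| ?y)%N |- _ =>
      solve [ exfalso; apply: (closeD _ _ _ Hm H1 H2); lia ]
  | Hm : is_true (2 < ?m)%N, Hn : is_true (?m != 4%N), H1 : is_true (?m %| ?x)%N,
    H2 : is_true (?m %| ?y)%N |- _ =>
      solve [ exfalso; apply: (closeE _ _ _ Hm Hn H1 H2); lia ]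
  end.

Lemma NT1 m1 m2 D : (2 < m1)%N -> (2 < m2)%N -> (2 <= D)%N ->
  (m1 %| D)%N || (m2 %| D)%N -> (m1 %| D - 1)%N || (m2 %| D - 1)%N ->
  ~~ ((m1 %| D - 2)%N || (m2 %| D - 2)%N).
Proof.
move=> h1 h2 D2 /orP [] a /orP [] b; apply/negP => /orP [] c; ntsolve.
Qed.

Lemma NT2 m1 m2 D : (2 < m1)%N -> (2 < m2)%N -> coprime m1 m2 -> (6 <= D)%N ->
  (m1 %| D)%N || (m2 %| D)%N -> (m1 %| D - 2)%N || (m2 %| D - 2)%N ->
  (m1 %| D - 4)%N || (m2 %| D - 4)%N -> (m1 %| D - 6)%N || (m2 %| D - 6)%N -> False.
Proof.
move=> h1 h2 cop D6.
have [n1|n2] : m1 != 4%N \/ m2 != 4%N.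
  case: (eqVneq m1 4%N) => [E|]; last by left.
  right; apply/eqP => E2; by rewrite E E2 in cop.
all: move=> /orP [] a /orP [] b /orP [] c /orP [] e; ntsolve.
Qed.
Section Psi.
Variable R : rcfType.
Implicit Types p q : {poly R}.

Definition h2 : {poly R} := 'X^2 + 1.
Definition tX : {poly R} := 'X *+ 2.
Definition psi (D : nat) p : {poly R} :=
  \sum_(i < D.+1) p`_i *: (h2 ^+ i * tX ^+ (D - i)).

Lemma psiD D p q : psi D (p + q) = psi D p + psi D q.
Proof. rewrite /psi -big_split /=; apply: eq_bigr => i _; by rewrite coefD scalerDl. Qed.
Lemma psiZ D c p : psi D (c *: p) = c *: psi D p.
Proof. rewrite /psi scaler_sumr; apply: eq_bigr => i _; by rewrite coefZ scalerA. Qed.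
Lemma psi0 D : psi D 0 = 0.
Proof. rewrite /psi big1 // => i _; by rewrite coef0 scale0r. Qed.
Lemma psiN D p : psi D (- p) = - psi D p.
Proof. by rewrite -scaleN1r psiZ scaleN1r. Qed.
Lemma psiB D p q : psi D (p - q) = psi D p - psi D q.
Proof. by rewrite psiD psiN. Qed.
Lemma psi_sum D I (r : seq I) (P : pred I) (F : I -> {poly R}) :
  psi D (\sum_(i <- r | P i) F i) = \sum_(i <- r | P i) psi D (F i).
Proof. by apply: (big_morph (psi D) (psiD D) (psi0 D)). Qed.

Lemma psiC D c : psi D c%:P = c *: tX ^+ D.
Proof.
rewrite /psi big_ord_recl /= coefC eqxx expr0 mul1r subn0 big1 ?addr0 // => i _.
by rewrite coefC /= scale0r.
Qed.

Lemma psi_shift D p : (size p <= D.+1)%N -> psi D.+1 p = tX * psi D p.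
Proof.
move=> sp; rewrite /psi big_ord_recr /= (nth_default 0 sp) scale0r addr0 mulr_sumr.
apply: eq_bigr => i _; rewrite subSn; last by rewrite -ltnS. rewrite exprS mulrCA scalerAr //.

Qed.

Lemma psi_shiftn D k p : (size p <= D.+1)%N -> psi (D + k) p = tX ^+ k * psi D p.
Proof.
move=> sp; elim: k => [|k IH]; first by rewrite addn0 expr0 mul1r.
rewrite addnS psi_shift ?IH ?exprS ?mulrA //.
by apply: (leq_trans sp); rewrite ltnS leq_addr.
Qed.

Lemma psi_mulX D p : psi D.+1 ('X * p) = h2 * psi D p.
Proof.
rewrite /psi big_ord_recl /= coefXM eqxx scale0r add0r mulr_sumr.
apply: eq_bigr => i _ /=; rewrite coefXM /= subSS exprS -mulrA scalerAr //.
Qed.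

Lemma psi_mul D1 D2 p q : (size p <= D1.+1)%N -> (size q <= D2.+1)%N ->
  psi (D1 + D2) (p * q) = psi D1 p * psi D2 q.
Proof.
move=> sp; elim/poly_ind: q D2 => [|q c IH] D2 sq.
  by rewrite mulr0 !psi0 mulr0.
have [-> | nq] := eqVneq q 0.
  rewrite mul0r add0r mulrC mul_polyC psiZ psiC psi_shiftn //.
  by rewrite -!mul_polyC; ring.
move: sq; rewrite size_MXaddC (negbTE nq) /=; case: D2 => [|D2] sq.
  by move: sq; rewrite ltnS leqn0 size_poly_eq0 (negbTE nq).
rewrite mulrDr mulrA psiD [p * q * 'X]mulrC [p * c%:P]mulrC mul_polyC psiZ (@psi_shiftn D1 D2.+1 p sp).
rewrite addnS psi_mulX IH // psiD [q * 'X]mulrC psi_mulX psiC.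
by rewrite -!mul_polyC; ring.
Qed.

Lemma sum_top (f : nat -> R) D k : (k <= D)%N ->
  (forall i, (i < D - k)%N -> f i = 0) ->
  \sum_(i < D.+1) f i = \sum_(l < k.+1) f (D - l)%N.
Proof.
move=> kD f0; rewrite -(big_mkord xpredT f).
rewrite (@big_cat_nat _ _ _ (D - k)) /=; [|by []|by lia].
rewrite big_nat_cond big1 ?add0r; last by move=> i /andP [/andP [_ Hi] _]; exact: f0.
rewrite big_nat_rev /= -{1}[(D - k)%N]add0n big_addn -(big_mkord xpredT (fun l => f (D - l)%N)).
have -> : (D.+1 - (D - k) = k.+1)%N by lia.
apply: eq_big_nat => i /andP [_ Hi]; congr f; lia.
Qed.

Lemma coef_h2 n t : (h2 ^+ n)`_t = if odd t then 0 else ('C(n, t./2))%:R.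
Proof.
elim: n t => [|n IH] t.
  rewrite expr0 coef1; case: t => [|[|t]] //=.
  by case: (odd t).
rewrite exprSr /h2 mulrDr mulr1 -/h2 coefD coefMXn !IH.
case: t => [|[|t]] /=; first by rewrite add0r !bin0.
  by rewrite add0r.
rewrite subn2 /=; case: (odd t) => /=; first by rewrite addr0.
by rewrite binS natrD addrC.
Qed.

Lemma coef_h2_top n j : (j <= n.*2)%N ->
  (h2 ^+ n)`_(n.*2 - j) = if odd j then 0 else ('C(n, j./2))%:R.
Proof.
move=> jn; rewrite coef_h2 oddB // odd_double /=.
case Hj: (odd j) => //.
have ej : j = (j./2).*2 by rewrite halfK Hj subn0.
rewrite {1}ej -doubleB half_double bin_sub //.
by rewrite -leq_double -ej.
Qed.

Lemma size_h2 : (size h2 <= 3)%N.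
Proof.
rewrite /h2 (leq_trans (size_polyD _ _)) // geq_max size_polyXn size_poly1 //.
Qed.

Lemma coef_psi_top D (H : {poly R}) k : (size H <= D.+1)%N -> (k <= D)%N ->
  (psi D H)`_(D.*2 - k) =
  \sum_(l < k.+1) H`_(D - l) * ((h2 ^+ (D - l))`_((D - l).*2 - (k - l)) *+ 2 ^ l).
Proof.
move=> sH kD; rewrite /psi coef_sum.
pose F := fun i : nat => H`_i * ((h2 ^+ i)`_(D.*2 - k - (D - i)) *+ 2 ^ (D - i)).
transitivity (\sum_(i < D.+1) F i).
  apply: eq_bigr => i _; rewrite coefZ /tX exprMn_n mulrnAr coefMn coefMXn /F.
  by rewrite ifF //; apply/negbTE; rewrite -leqNgt; lia.
rewrite (@sum_top F D k kD) => [|i Hi]; last first.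
  rewrite /F [(h2 ^+ i)`_ _]nth_default ?mul0rn ?mulr0 //.
  apply: (leq_trans (size_poly_exp_leq _ _)); rewrite -subn1.
  apply: (@leq_trans (2 * i).+1); first by rewrite ltnS leq_mul2r; have := size_h2; lia.
  rewrite -mul2n; lia.
rewrite /F.
apply: eq_bigr => l _; have := ltn_ord l; move=> lk.
congr (_ * (_ *+ _)); last by rewrite (_ : (D - (D - l) = l)%N) //; lia.
congr (_`_ _); rewrite -!mul2n; lia.
Qed.


Lemma size_cheb n : (size (cheb R n) <= n.+1)%N.
Proof.
suff H : forall n, (size (cheb R n) <= n.+1)%N /\ (size (cheb R n.+1) <= n.+2)%N.
  by case: (H n).
clear n; elim=> [|n [IH1 IH2]]; first by rewrite cheb0 cheb1 size_poly1 size_polyX.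
split=> //; rewrite chebSS (leq_trans (size_polyD _ _)) // geq_max size_polyN.
apply/andP; split; last by apply: (leq_trans IH1); lia.
apply: (leq_trans (size_mul_leq _ _)).
have H : (size (2%:R *: 'X : {poly R}) <= 2)%N.
  by rewrite (leq_trans (size_scale_leq _ _)) ?size_polyX.
apply: (@leq_trans (2 + n.+2).-1) => //; rewrite -!subn1 leq_sub2r // leq_add //.
Qed.

Lemma size_cheb_pred n : ((size (cheb R n)).-1 <= n)%N.
Proof. have := size_cheb n; lia. Qed.

Lemma psi1X2 : psi 1 (2%:R *: 'X) = 2%:R * h2.
Proof.
rewrite /psi !big_ord_recr big_ord0 /= !coefZ !coefX /= mulr0 scale0r add0r.
by rewrite add0r mulr1 subnn expr0 expr1 mulr1 scaler_nat mulr_natl.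
Qed.

Lemma psi_cheb_rec n : psi n.+2 (cheb R n.+2) =
  2%:R * h2 * psi n.+1 (cheb R n.+1) - tX ^+ 2 * psi n (cheb R n).
Proof.
rewrite chebSS psiB.
have -> : psi n.+2 (2%:R *: 'X * cheb R n.+1) = psi (1 + n.+1) (2%:R *: 'X * cheb R n.+1) by [].
rewrite psi_mul ?size_cheb ?psi1X2 //; last first.
  by rewrite (leq_trans (size_scale_leq _ _)) ?size_polyX.
by rewrite -(@psi_shiftn n 2 _ (size_cheb n)) addn2.
Qed.

Lemma psi_cheb n : psi n.+1 (cheb R n.+1) = (2 ^ n)%:R * ('X^((n.+1).*2) + 1).
Proof.
suff H : forall n, psi n.+1 (cheb R n.+1) = (2 ^ n)%:R * ('X^((n.+1).*2) + 1) /\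
   psi n.+2 (cheb R n.+2) = (2 ^ n.+1)%:R * ('X^((n.+2).*2) + 1) by case: (H n).
have Q0 : psi 0 (cheb R 0) = 1 by rewrite cheb0 -polyC1 psiC expr0 scale1r.
have Q1 : psi 1 (cheb R 1) = h2.
  rewrite cheb1 /psi !big_ord_recr big_ord0 /= !coefX /= scale0r add0r.
  by rewrite add0r scale1r subnn expr0 expr1 mulr1.
clear n; elim=> [|n [IH1 IH2]].
  split; first by rewrite Q1 /h2 expn0 /=; ring.
  rewrite psi_cheb_rec Q1 Q0 /h2 /tX expn1 /=; ring.
split=> //; rewrite psi_cheb_rec IH2 IH1.
rewrite (_ : ((n.+3).*2 = (n.+1).*2 + 4)%N); last by rewrite -!mul2n; lia.
rewrite (_ : ((n.+2).*2 = (n.+1).*2 + 2)%N); last by rewrite -!mul2n; lia.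
rewrite !exprD !expnS !natrM /h2 /tX; ring.
Qed.

Definition suppm (m c : nat) (r : {poly R}) := forall e, r`_e != 0 -> e = c %[mod m].

Lemma suppm0 m c : suppm m c 0.
Proof. by move=> e; rewrite coef0 eqxx. Qed.

Lemma suppm_add m c r1 r2 : suppm m c r1 -> suppm m c r2 -> suppm m c (r1 + r2).
Proof.
move=> H1 H2 e; rewrite coefD => H.
have [/eqP E|] := boolP (r1`_e == 0); last exact: H1.
by apply: H2; rewrite E add0r in H.
Qed.

Lemma suppm_scale m c k r : suppm m c r -> suppm m c (k *: r).
Proof.
move=> H e; rewrite coefZ => Hk; apply: H; apply: contra_neq Hk => ->; exact: mulr0.
Qed.

Lemma suppm_sum m c I (s : seq I) (P : pred I) (F : I -> {poly R}) :
  (forall i, P i -> suppm m c (F i)) -> suppm m c (\sum_(i <- s | P i) F i).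
Proof.
move=> H; apply: (big_ind (suppm m c)) => //; [exact: suppm0 | exact: suppm_add].
Qed.

Lemma suppm_cong m c c' r : c = c' %[mod m] -> suppm m c r -> suppm m c' r.
Proof. by move=> E H e /H ->. Qed.

Lemma suppm_mul m c1 c2 r1 r2 : suppm m c1 r1 -> suppm m c2 r2 ->
  suppm m (c1 + c2) (r1 * r2).
Proof.
move=> H1 H2 e; rewrite coefM => H.
have [/existsP [j Hj] | /existsPn Hn] :=
  boolP [exists j : 'I_e.+1, r1`_j * r2`_(e - j) != 0]; last first.
  by rewrite big1 ?eqxx // in H => j _; apply/eqP; move: (Hn j); rewrite negbK.
have Hj1 : r1`_j != 0 by apply: contra_neq Hj => ->; rewrite mul0r.
have Hj2 : r2`_(e - j) != 0 by apply: contra_neq Hj => ->; rewrite mulr0.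
have je : (j <= e)%N by rewrite -ltnS.
rewrite -(subnKC je) -modnDm (H1 _ Hj1) (H2 _ Hj2) modnDm //.
Qed.

Lemma suppm_one m : suppm m 0 1.
Proof. move=> e; rewrite coef1; case: (eqVneq e 0%N) => [-> | ne] //; by rewrite eqxx. Qed.

Lemma suppm_exp m c r i : suppm m c r -> suppm m (c * i) (r ^+ i).
Proof.
move=> H; elim: i => [|i IH]; first by rewrite muln0 expr0; exact: suppm_one.
by rewrite exprS mulnS; apply: suppm_mul.
Qed.

Lemma suppm_tX m : suppm m 1 tX.
Proof. move=> e; rewrite /tX coefMn coefX; case: (eqVneq e 1%N) => [-> | ne] //; by rewrite mul0rn eqxx. Qed.

Lemma suppm_Q n : suppm n.+1 0 (psi n.+1 (cheb R n.+1)).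
Proof.
rewrite psi_cheb => e; rewrite mulr_natl coefMn coefD coefXn coef1 => H.
have : (e == (n.+1).*2) || (e == 0%N).
  apply: contraNT H => /norP [/negbTE-> /negbTE->]; by rewrite add0r mul0rn.
case/orP=> /eqP ->; last by [].
by rewrite -mul2n modnMl mod0n.
Qed.

Lemma psi_chebexp n i : psi (i * n.+1) (cheb R n.+1 ^+ i) = (psi n.+1 (cheb R n.+1)) ^+ i.
Proof.
elim: i => [|i IH]; first by rewrite mul0n !expr0 -polyC1 psiC expr0 scale1r.
rewrite mulSn !exprS psi_mul ?size_cheb ?IH //.
apply: (leq_trans (size_poly_exp_leq _ _)); rewrite ltnS mulnC leq_mul2l.
by rewrite size_cheb_pred orbT.
Qed.

Lemma supp_comp (V : {poly R}) n D : ((size V).-1 * n.+1 <= D)%N ->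
  suppm n.+1 D (psi D (V \Po cheb R n.+1)).
Proof.
move=> sV; rewrite comp_polyE psi_sum; apply: suppm_sum => i _.
rewrite psiZ; apply: suppm_scale.
have iD : (i * n.+1 <= D)%N.
  apply: leq_trans sV; rewrite leq_mul2r; apply/orP; right.
  by case: i => i /= Hi; rewrite -ltnS (ltn_predK Hi).
rewrite -{2}(subnKC iD) psi_shiftn; last first.
  apply: (leq_trans (size_poly_exp_leq _ _)); rewrite ltnS mulnC leq_mul2l.
  by rewrite size_cheb_pred orbT.
rewrite psi_chebexp.
apply: (@suppm_cong _ ((D - i * n.+1) + 0)%N).
  by rewrite addn0 -{2}(subnKC iD) modnMDl.
apply: suppm_mul; last by rewrite -{1}(mul0n i); apply: suppm_exp; exact: suppm_Q.
by rewrite -{1}(mul1n (D - i * n.+1)%N); apply: suppm_exp; exact: suppm_tX.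
Qed.

Lemma coef_tXn_mul k (r : {poly R}) e : (tX ^+ k * r)`_(e + k) = r`_e *+ 2 ^ k.
Proof.
rewrite /tX exprMn_n mulrnAl coefMn coefXnM ifF ?addnK //.
by apply/negbTE; rewrite -leqNgt leq_addl.
Qed.

Lemma supp_top (V1 V2 : {poly R}) n1 n2 D k :
  size ((V1 \Po cheb R n1.+1) + (V2 \Po cheb R n2.+1)) = D.+1 -> (k <= D)%N ->
  (psi D ((V1 \Po cheb R n1.+1) + (V2 \Po cheb R n2.+1)))`_(D.*2 - k) != 0 ->
  (n1.+1 %| D - k)%N || (n2.+1 %| D - k)%N.
Proof.
set F := _ + _ => sF kD Hne.
set M := maxn ((size V1).-1 * n1.+1) ((size V2).-1 * n2.+1).
have sC : forall V n, (size (V \Po cheb R n.+1) <= ((size V).-1 * n.+1).+1)%N.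
  move=> V n; apply: (leq_trans (size_comp_poly_leq _ _)).
  by rewrite ltnS leq_mul2l size_cheb_pred orbT.
have sM : (size F <= M.+1)%N.
  rewrite (leq_trans (size_polyD _ _)) // geq_max; apply/andP; split.
    by apply: (leq_trans (sC _ _)); rewrite ltnS leq_maxl.
  by apply: (leq_trans (sC _ _)); rewrite ltnS leq_maxr.
have DM : (D <= M)%N by rewrite -ltnS -sF.
have eqM : psi M F = tX ^+ (M - D) * psi D F.
  by rewrite -{1}(subnKC DM) psi_shiftn ?sF.
have H2 : (psi M F)`_(D.*2 - k + (M - D)) != 0.
  by rewrite eqM coef_tXn_mul mulrn_eq0 negb_or Hne expn_eq0.
have Ee : (D.*2 - k + (M - D) = M + (D - k))%N by rewrite -mul2n; lia.
rewrite Ee /F psiD coefD in H2.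
have key : forall n V, suppm n.+1 M (psi M (V \Po cheb R n.+1)) ->
    (psi M (V \Po cheb R n.+1))`_(M + (D - k)) != 0 -> (n.+1 %| D - k)%N.
  move=> n V Hs /Hs /eqP; rewrite -{2}[M]addn0 eqn_modDl mod0n => /eqP Hd.
  by rewrite /dvdn Hd.
have [H|H] := boolP ((psi M (V1 \Po cheb R n1.+1))`_(M + (D - k)) != 0).
  by rewrite (key _ _ _ H) //; apply: supp_comp; rewrite leq_maxl.
apply/orP; right; apply: (key _ V2); first by apply: supp_comp; rewrite leq_maxr.
by move: H2; rewrite negbK in H; rewrite (eqP H) add0r.
Qed.


Lemma coef_lin_exp (a b : R) n j :
  ((a *: 'X + b%:P) ^+ n)`_j = a ^+ j * b ^+ (n - j) *+ 'C(n, j).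
Proof.
rewrite addrC exprDn.
rewrite (eq_bigr (fun k : 'I_n.+1 => (b ^+ (n - k) * a ^+ k *+ 'C(n, k)) *: 'X^k)); last first.
  by move=> k _; rewrite -polyC_exp exprZn mul_polyC scalerA scalerMnl.
rewrite coef_sum (eq_bigr (fun i : 'I_n.+1 => if (i == j :> nat) then b ^+ (n - i) * a ^+ i *+ 'C(n, i) else 0)); last first.
  by move=> i _; rewrite coefZ coefXn eq_sym; case: eqP => _; rewrite ?mulr1 ?mulr0.
rewrite -big_mkcond (big_ord1_eq _ (fun k => b ^+ (n - k) * a ^+ k *+ 'C(n, k))); case: ltnP => H.
  by rewrite mulrC.
by rewrite bin_small ?mulr0n.
Qed.

Lemma coef_comp_lin (G : {poly R}) (a b : R) j :
  (G \Po (a *: 'X + b%:P))`_j =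
  \sum_(i < size G) G`_i * (a ^+ j * b ^+ (i - j) *+ 'C(i, j)).
Proof. by rewrite coef_comp_poly; apply: eq_bigr => i _; rewrite coef_lin_exp. Qed.

Lemma coef_comp_scale (G : {poly R}) (a : R) j :
  (G \Po (a *: 'X + 0%:P))`_j = a ^+ j * G`_j.
Proof.
rewrite addr0 comp_polyE.
rewrite (eq_bigr (fun i : 'I_(size G) => (G`_i * a ^+ i) *: 'X^i)); last first.
  by move=> i _; rewrite exprZn scalerA.
rewrite coef_sum (eq_bigr (fun i : 'I_(size G) => if (i == j :> nat) then G`_i * a ^+ i else 0)); last first.
  by move=> i _; rewrite coefZ coefXn eq_sym; case: eqP => _; rewrite ?mulr1 ?mulr0.
rewrite -big_mkcond (big_ord1_eq _ (fun k => G`_k * a ^+ k)); case: ltnP => H; first by rewrite mulrC.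
by rewrite nth_default // mulr0.
Qed.


Lemma psi_top6 (H : {poly R}) D : (size H <= D.+1)%N -> (6 <= D)%N ->
  (psi D H)`_(D.*2 - 6) = H`_D * ('C(D, 3))%:R + H`_(D - 2) * ('C(D - 2, 2))%:R * 4%:R
     + H`_(D - 4) * (D - 4)%:R * 16%:R + H`_(D - 6) * 64%:R.
Proof.
move=> sH D6; rewrite coef_psi_top //.
rewrite !big_ord_recr big_ord0 /= add0r.
rewrite !coef_h2_top /=; try by rewrite -mul2n; lia.
rewrite !subn0 !bin1 !bin0 !mul0rn !mulr0 !addr0.
ring.
Qed.


Lemma psi_top0 (H : {poly R}) D : (size H <= D.+1)%N ->
  (psi D H)`_(D.*2 - 0) = H`_D.
Proof.
move=> sH; rewrite coef_psi_top // !big_ord_recr big_ord0 /= add0r.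
rewrite !coef_h2_top /= ?subn0 ?bin0 //; ring.
Qed.

Lemma psi_top1 (H : {poly R}) D : (size H <= D.+1)%N -> (1 <= D)%N ->
  (psi D H)`_(D.*2 - 1) = H`_(D - 1) * 2%:R.
Proof.
move=> sH D1; rewrite coef_psi_top // !big_ord_recr big_ord0 /= add0r.
rewrite !coef_h2_top /=; try by rewrite -mul2n; lia.
rewrite !subn0 !bin0 !mul0rn !mulr0 !add0r; ring.
Qed.

Lemma psi_top2 (H : {poly R}) D : (size H <= D.+1)%N -> (2 <= D)%N ->
  (psi D H)`_(D.*2 - 2) = H`_D * D%:R + H`_(D - 2) * 4%:R.
Proof.
move=> sH D2; rewrite coef_psi_top // !big_ord_recr big_ord0 /= add0r.
rewrite !coef_h2_top /=; try by rewrite -mul2n; lia.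
rewrite !subn0 !bin1 !bin0 !mul0rn !mulr0 !addr0; ring.
Qed.

Lemma psi_top4 (H : {poly R}) D : (size H <= D.+1)%N -> (4 <= D)%N ->
  (psi D H)`_(D.*2 - 4) = H`_D * ('C(D, 2))%:R + H`_(D - 2) * (D - 2)%:R * 4%:R
     + H`_(D - 4) * 16%:R.
Proof.
move=> sH D4; rewrite coef_psi_top // !big_ord_recr big_ord0 /= add0r.
rewrite !coef_h2_top /=; try by rewrite -mul2n; lia.
rewrite !subn0 !bin1 !bin0 !mul0rn !mulr0 !addr0; ring.
Qed.

Lemma binR2 n : ('C(n, 2))%:R * 2%:R = n%:R * (n%:R - 1) :> R.
Proof.
case: n => [|n]; first by rewrite /= !mul0r.
have E : ('C(n.+1, 2) * 2 = n.+1 * n)%N.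
  by rewrite -[2%N]/(2`!) bin_ffact ffactnS ffactn1.
by rewrite -natrM E natrM -addn1 natrD addrK.
Qed.

Lemma binR3 n : ('C(n, 3))%:R * 6%:R = n%:R * (n%:R - 1) * (n%:R - 2) :> R.
Proof.
case: n => [|[|n]]; first by rewrite /= !mul0r.
  by rewrite bin_small // mul0r subrr mulr0 mul0r.
have E : ('C(n.+2, 3) * 6 = n.+2 * n.+1 * n)%N.
  by rewrite -[6%N]/(3`!) bin_ffact !ffactnS ffactn0 muln1 mulnA.
rewrite -natrM E !natrM -[n.+2]addn2 -[n.+1]addn1 !natrD.
ring.
Qed.


Lemma ML_coefs (a b : R) (G : {poly R}) D k : size G = D.+1 -> (k <= D)%N ->
  (G \Po (a *: 'X + b%:P))`_(D - k) =
  \sum_(l < k.+1) G`_(D - l) * (a ^+ (D - k) * b ^+ ((D - l) - (D - k)) *+ 'C(D - l, D - k)).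
Proof.
move=> sG kD; rewrite coef_comp_lin sG.
rewrite (@sum_top (fun i => G`_i * (a ^+ (D - k) * b ^+ (i - (D - k)) *+ 'C(i, D - k))) D k kD) //.
by move=> i Hi; rewrite bin_small ?mulr0n ?mulr0.
Qed.


Lemma ML_F0 (a b : R) (G : {poly R}) D : size G = D.+1 ->
  (G \Po (a *: 'X + b%:P))`_D = a ^+ D * G`_D.
Proof.
move=> sG; have := @ML_coefs a b G D 0 sG (leq0n D).
rewrite subn0 big_ord_recr big_ord0 /= add0r !subn0 subnn expr0 mulr1 binn mulr1n => ->.
by rewrite mulrC.
Qed.

Lemma ML_F1 (a b : R) (G : {poly R}) D : size G = D.+1 -> (1 <= D)%N ->
  (G \Po (a *: 'X + b%:P))`_(D - 1) = a ^+ (D - 1) * (G`_(D - 1) + G`_D * b * D%:R).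
Proof.
move=> sG D1; rewrite (@ML_coefs a b G D 1 sG D1).
rewrite !big_ord_recr big_ord0 /= add0r !subn0 subnn expr0 mulr1 binn mulr1n.
have -> : (D - (D - 1) = 1)%N by lia.
rewrite bin_sub // bin1 expr1; ring.
Qed.

Lemma ML_F2 (a b : R) (G : {poly R}) D : size G = D.+1 -> (2 <= D)%N ->
  (G \Po (a *: 'X + b%:P))`_(D - 2) = a ^+ (D - 2) *
    (G`_(D - 2) + G`_(D - 1) * b * (D - 1)%:R + G`_D * b ^+ 2 * ('C(D, 2))%:R).
Proof.
move=> sG D2; rewrite (@ML_coefs a b G D 2 sG D2).
rewrite !big_ord_recr big_ord0 /= add0r !subn0 subnn expr0 mulr1 binn mulr1n.
have -> : (D - (D - 2) = 2)%N by lia.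
have -> : (D - 1 - (D - 2) = 1)%N by lia.
have -> : 'C(D - 1, D - 2) = (D - 1)%N.
  by rewrite (_ : (D - 2 = D - 1 - 1)%N) ?bin_sub ?bin1 //; lia.
rewrite bin_sub // expr1; ring.
Qed.


Lemma ML (m1 m2 : nat) (a b : R) (G : {poly R}) (D : nat) :
  (2 < m1)%N -> (2 < m2)%N -> coprime m1 m2 -> a != 0 -> size G = D.+1 -> (6 <= D)%N ->
  (forall k, (0 < k < 7)%N -> (psi D G)`_(D.*2 - k) = 0) ->
  (forall k, (k <= 6)%N -> (psi D (G \Po (a *: 'X + b%:P)))`_(D.*2 - k) != 0 ->
      (m1 %| D - k)%N || (m2 %| D - k)%N) ->
  a ^+ 2 <= 1 /\ (b != 0 -> a ^+ 2 < 1).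
Proof.
move=> h1 h2 cop a0 sG D6 Gz Fs.
have sL : size (a *: 'X + b%:P) = 2.
  by rewrite -mul_polyC size_MXaddC polyC_eq0 (negbTE a0) /= size_polyC a0.
have sF : size (G \Po (a *: 'X + b%:P)) = D.+1 by rewrite size_comp_poly2.
have sGl : (size G <= D.+1)%N by rewrite sG.
have sFl : (size (G \Po (a *: 'X + b%:P)) <= D.+1)%N by rewrite sF.
have g0 : G`_D != 0.
  have : lead_coef G != 0 by rewrite lead_coef_eq0 -size_poly_eq0 sG.
  by rewrite lead_coefE sG.
have d6 : (6%:R : R) <= D%:R by rewrite ler_nat.
have dn0 : (D%:R : R) != 0 by rewrite pnatr_eq0; apply/eqP; lia.
have hD0 : (m1 %| D - 0)%N || (m2 %| D - 0)%N.
  apply: Fs => //; rewrite psi_top0 // ML_F0 //.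
  by rewrite mulf_neq0 // expf_neq0.
have E2 := Gz 2%N isT; rewrite psi_top2 // in E2; last by lia.
case: (eqVneq b 0) => [b0 | bn0]; last first.
  have E1 := Gz 1%N isT; rewrite psi_top1 // in E1; last by lia.
  have g1 : G`_(D - 1) = 0.
    by move/eqP: E1; rewrite mulf_eq0 pnatr_eq0 orbF => /eqP.
  have hD1 : (m1 %| D - 1)%N || (m2 %| D - 1)%N.
    apply: Fs => //; rewrite psi_top1 //; last by lia.
    rewrite ML_F1 //; last by lia.
    by rewrite g1 add0r !mulf_neq0 // ?expf_neq0 // ?pnatr_eq0.
  have P2 : (psi D (G \Po (a *: 'X + b%:P)))`_(D.*2 - 2) = 0.
    have nS : ~~ ((m1 %| D - 2)%N || (m2 %| D - 2)%N).
      by apply: NT1 => //; [lia | rewrite subn0 in hD0].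
    by apply/eqP; apply: contraNT nS => H; exact: Fs 2%N isT H.
  rewrite psi_top2 // in P2; last by lia.
  rewrite ML_F0 // ML_F2 // in P2; last by lia.
  move: P2; rewrite g1 => P2.
  have C2 := binR2 D.
  have eg2 : G`_(D - 2) = - (G`_D * D%:R) / 4%:R.
    by apply: (@mulIf _ 4%:R); rewrite ?pnatr_eq0 // mulfVK ?pnatr_eq0 //; lra.
  have eC2 : ('C(D, 2))%:R = (D%:R : R) * (D%:R - 1) / 2%:R.
    by rewrite -C2 mulfK ?pnatr_eq0.
  have aD : a ^+ D = a ^+ (D - 2) * a ^+ 2 by rewrite -exprD subnK //; lia.
  have key : a ^+ (D - 2) * (G`_D * D%:R * (a ^+ 2 - 1 + 2%:R * (D%:R - 1) * b ^+ 2)) = 0.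
    rewrite -[RHS]P2 aD eg2 eC2; rewrite natrB; last by lia.
    by field.
  move/eqP: key; rewrite !mulf_eq0 expf_eq0 (negbTE a0) (negbTE g0) (negbTE dn0) andbF /=.
  move=> /eqP key.
  have hb : 0 < b ^+ 2 by rewrite lt0r sqr_ge0 andbT expf_neq0.
  have : a ^+ 2 < 1 by nra.
  by move=> H; split; [exact: ltW | move=> _].
split; last by [].
subst b.
have Fc : forall j, (G \Po (a *: 'X + 0%:P))`_j = a ^+ j * G`_j.
  by move=> j; exact: coef_comp_scale.
rewrite leNgt; apply/negP => s1.
have s10 : a ^+ 2 - 1 != 0.
  by rewrite subr_eq0; apply/eqP => E; rewrite E ltxx in s1.
have E4 := Gz 4%N isT; rewrite psi_top4 // in E4; last by lia.
have E6 := Gz 6%N isT; rewrite psi_top6 // in E6.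
set A := a ^+ (D - 6).
have A0 : A != 0 by rewrite expf_neq0.
have eA : forall l, (l <= 6)%N -> a ^+ (D - l) = A * a ^+ (6 - l).
  by move=> l l6; rewrite /A -exprD; congr (_ ^+ _); lia.
have aD : a ^+ D = A * a ^+ 6 by rewrite -(eA 0%N) ?subn0.
have eD2 : ((D - 2)%:R : R) = D%:R - 2%:R by rewrite natrB //; lia.
have eD4 : ((D - 4)%:R : R) = D%:R - 4%:R by rewrite natrB //; lia.
have eC2 : ('C(D, 2))%:R = (D%:R : R) * (D%:R - 1) / 2%:R.
  by rewrite -(binR2 D) mulfK ?pnatr_eq0.
have eC2' : ('C(D - 2, 2))%:R = ((D%:R : R) - 2%:R) * (D%:R - 2%:R - 1) / 2%:R.
  by rewrite -eD2 -(binR2 (D - 2)) mulfK ?pnatr_eq0.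
have eC3 : ('C(D, 3))%:R = (D%:R : R) * (D%:R - 1) * (D%:R - 2%:R) / 6%:R.
  by rewrite -(binR3 D) mulfK ?pnatr_eq0.
rewrite eD2 eD4 eC2 eC2' eC3 in E4 E6.
have eg2 : G`_(D - 2) = - (G`_D * D%:R) / 4%:R.
  by apply: (@mulIf _ 4%:R); rewrite ?pnatr_eq0 // mulfVK ?pnatr_eq0 //; lra.
have eg4 : G`_(D - 4) = - (G`_D * ((D%:R : R) * (D%:R - 1) / 2%:R)
     + G`_(D - 2) * (D%:R - 2%:R) * 4%:R) / 16%:R.
  by apply: (@mulIf _ 16%:R); rewrite ?pnatr_eq0 // mulfVK ?pnatr_eq0 //; lra.
have eg6 : G`_(D - 6) = - (G`_D * ((D%:R : R) * (D%:R - 1) * (D%:R - 2%:R) / 6%:R)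
     + G`_(D - 2) * (((D%:R : R) - 2%:R) * (D%:R - 2%:R - 1) / 2%:R) * 4%:R
     + G`_(D - 4) * (D%:R - 4%:R) * 16%:R) / 64%:R.
  by apply: (@mulIf _ 64%:R); rewrite ?pnatr_eq0 // mulfVK ?pnatr_eq0 //; lra.
set t := a ^+ 2 - 1.
have t0 : 0 < t by rewrite /t subr_gt0.
have P2 : (psi D (G \Po (a *: 'X + 0%:P)))`_(D.*2 - 2) != 0.
  have -> : (psi D (G \Po (a *: 'X + 0%:P)))`_(D.*2 - 2) =
      A * a ^+ 4 * (G`_D * D%:R * t).
    rewrite psi_top2 // ?Fc; last by lia.
    rewrite aD (eA 2%N) // eg2 /t; by field.
  repeat apply: mulf_neq0 => //; rewrite ?expf_neq0 //; exact: lt0r_neq0.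
have P4 : (psi D (G \Po (a *: 'X + 0%:P)))`_(D.*2 - 4) != 0.
  have -> : (psi D (G \Po (a *: 'X + 0%:P)))`_(D.*2 - 4) =
      A * a ^+ 2 * (G`_D * D%:R * t * ((D%:R - 1) * t + 2%:R)) / 2%:R.
    rewrite psi_top4 // ?Fc; last by lia.
    rewrite aD (eA 2%N) // (eA 4%N) // eD2 eC2 eg4 eg2 /t; by field.
  repeat apply: mulf_neq0 => //; rewrite ?expf_neq0 ?invr_eq0 ?pnatr_eq0 //; apply: lt0r_neq0 => //.
  nra.
have P6 : (psi D (G \Po (a *: 'X + 0%:P)))`_(D.*2 - 6) != 0.
  have -> : (psi D (G \Po (a *: 'X + 0%:P)))`_(D.*2 - 6) =
      A * (G`_D * D%:R * t * (6%:R + 6%:R * (D%:R - 2%:R) * t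
         + (D%:R - 1) * (D%:R - 2%:R) * t ^+ 2)) / 6%:R.
    rewrite psi_top6 // ?Fc.
    rewrite aD (eA 2%N) // (eA 4%N) // (eA 6%N) // ?eD2 ?eD4 ?eC2 ?eC2' ?eC3 eg6 eg4 eg2 /t; by field.
  repeat apply: mulf_neq0 => //; rewrite ?expf_neq0 ?invr_eq0 ?pnatr_eq0 //; apply: lt0r_neq0 => //.
  have q1 : 0 < (D%:R - 2%:R) * t by apply: mulr_gt0 => //; lra.
  have q2 : 0 <= (D%:R - 1) * (D%:R - 2%:R) * t ^+ 2.
    by apply: mulr_ge0; [apply: mulr_ge0; lra | exact: sqr_ge0].
  lra.
rewrite subn0 in hD0.
by apply: (NT2 _ _ _ h1 h2 cop D6 hD0 (Fs 2%N isT P2) (Fs 4%N isT P4) (Fs 6%N isT P6)).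
Qed.

End Psi.
Arguments psi {R}.
Arguments supp_top {R V1 V2 n1 n2 D k}.
Arguments ML {R}.
Arguments psi_top0 {R}.

Lemma supp_single (R : rcfType) (V : {poly R}) n D k :
  size (V \Po cheb R n.+1) = D.+1 -> (k <= D)%N ->
  (psi D (V \Po cheb R n.+1))`_(D.*2 - k) != 0 -> (n.+1 %| D - k)%N.
Proof.
move=> sV kD H.
have E : V \Po cheb R n.+1 = (V \Po cheb R n.+1) + (0 \Po cheb R n.+1).
  by rewrite comp_poly0 addr0.
rewrite E in sV H.
by have := supp_top sV kD H; rewrite orbb.
Qed.

Arguments supp_single {R V n D k}.

Lemma Gzero (R : rcfType) (V : {poly R}) n D : (6 < n.+1)%N ->
  size (V \Po cheb R n.+1) = D.+1 -> (0 < D)%N ->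
  (6 <= D)%N /\ forall k, (0 < k < 7)%N -> (psi D (V \Po cheb R n.+1))`_(D.*2 - k) = 0.
Proof.
move=> n6 sV D0.
have hD : (n.+1 %| D)%N.
  rewrite -(subn0 D); apply: (supp_single sV (leq0n D)).
  rewrite psi_top0 ?sV //.
  have : lead_coef (V \Po cheb R n.+1) != 0 by rewrite lead_coef_eq0 -size_poly_eq0 sV.
  by rewrite lead_coefE sV.
have Dn : (n.+1 <= D)%N by apply: dvdn_leq.
split; first by lia.
move=> k /andP [k0 k7]; have kD : (k <= D)%N by lia.
apply/eqP; apply: contraTT k7 => H.
have := supp_single sV kD H => hk.
have := dvdn_sub hD hk; rewrite subKn // => hk2; have := dvdn_leq k0 hk2; lia.
Qed.

Arguments Gzero {R V n D}.

Theorem proposition3p1 (R : rcfType)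
  (V1 V2 U tV1 tV2 tU : {poly R}) (alpha beta : R)
  (m1 m2 tm1 tm2 : nat) :
  alpha != 0 ->
  (3 <= m1)%N -> (3 <= m2)%N -> (3 <= tm1)%N -> (3 <= tm2)%N ->
  coprime m1 m2 -> coprime tm1 tm2 ->
  let L := alpha *: 'X + beta%:P in
  (V1 \Po cheb R m1) + (V2 \Po cheb R m2) = (tU \Po cheb R (tm1 * tm2)) \Po L ->
  ((tV1 \Po cheb R tm1) \Po L) + ((tV2 \Po cheb R tm2) \Po L)
    = U \Po cheb R (m1 * m2) ->
  (1 < size (@polyseq R ((V1 \Po cheb R m1) + (V2 \Po cheb R m2))))%N ->
  (1 < size (@polyseq R ((tU \Po cheb R (tm1 * tm2)) \Po L)))%N ->
  (1 < size (@polyseq R (((tV1 \Po cheb R tm1) \Po L) + ((tV2 \Po cheb R tm2) \Po L))))%N ->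
  (1 < size (@polyseq R (U \Po cheb R (m1 * m2))))%N ->
  (alpha = 1 \/ alpha = -1) /\ beta = 0.
Proof.
move=> a0 hm1 hm2 htm1 htm2 cop tcop L eq1 eq2 nc1 nc2 nc3 nc4.
have sL : size L = 2.
  by rewrite /L -mul_polyC size_MXaddC polyC_eq0 (negbTE a0) /= size_polyC a0.
have [nN eN] : exists n, (tm1 * tm2 = n.+1)%N.
  by exists (tm1 * tm2).-1; rewrite prednK // muln_gt0; apply/andP; split; lia.
have nN6 : (6 < nN.+1)%N by rewrite -eN; nia.
have [nM eM] : exists n, (m1 * m2 = n.+1)%N.
  by exists (m1 * m2).-1; rewrite prednK // muln_gt0; apply/andP; split; lia.
have nM6 : (6 < nM.+1)%N by rewrite -eM; nia.
rewrite eN in eq1 nc2; rewrite eM in eq2 nc4.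
have [p1 e1] : exists p, m1 = p.+1 by exists m1.-1; lia.
have [p2 e2] : exists p, m2 = p.+1 by exists m2.-1; lia.
have [q1 f1] : exists p, tm1 = p.+1 by exists tm1.-1; lia.
have [q2 f2] : exists p, tm2 = p.+1 by exists tm2.-1; lia.
subst m1 m2 tm1 tm2.
set G1 := tU \Po cheb R nN.+1 in eq1 nc2.
have sG1L : size (G1 \Po L) = size G1 by rewrite size_comp_poly2.
set D1 := (size G1).-1.
have sG1 : size G1 = D1.+1 by rewrite /D1 prednK //; rewrite -sG1L; lia.
have [D16 Gz1] := Gzero nN6 sG1 (ltac:(rewrite sG1L sG1 in nc2; lia)).
have Fs1 : forall k, (k <= 6)%N -> (psi D1 (G1 \Po L))`_(D1.*2 - k) != 0 ->
    (p1.+1 %| D1 - k)%N || (p2.+1 %| D1 - k)%N.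
  move=> k k6 H; rewrite -eq1 in H; apply: (supp_top _ _ H); last by lia.
  by rewrite eq1 sG1L sG1.
have [r1 r1'] := ML p1.+1 p2.+1 alpha beta G1 D1 hm1 hm2 cop a0 sG1 D16 Gz1 Fs1.
set G2 := U \Po cheb R nM.+1 in eq2 nc4.
set W := (tV1 \Po cheb R q1.+1) + (tV2 \Po cheb R q2.+1).
have eqW : W \Po L = G2 by rewrite /W comp_polyD.
set Linv := alpha^-1 *: 'X + (- (beta / alpha))%:P.
have ai0 : alpha^-1 != 0 by rewrite invr_eq0.
have sLi : size Linv = 2.
  by rewrite /Linv -mul_polyC size_MXaddC polyC_eq0 (negbTE ai0) /= size_polyC ai0.
have hLL : L \Po Linv = 'X.
  rewrite /L comp_polyD comp_polyZ comp_polyX comp_polyC /Linv scalerDr scalerA.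
  rewrite mulfV // scale1r scale_polyC -addrA -polyCD.
  have -> : alpha * - (beta / alpha) + beta = 0 by field.
  by rewrite addr0.
have hW : W = G2 \Po Linv by rewrite -eqW -comp_polyA hLL comp_polyXr.
have sG2 : size G2 = (size G2).-1.+1 by rewrite prednK //; exact: (ltn_trans (isT : (0 < 1)%N) nc4).
have [D26 Gz2] := Gzero nM6 sG2 (ltac:(by rewrite -ltnS -sG2)).
have Fs2 : forall k, (k <= 6)%N -> (psi (size G2).-1 (G2 \Po Linv))`_((size G2).-1.*2 - k) != 0 ->
    (q1.+1 %| (size G2).-1 - k)%N || (q2.+1 %| (size G2).-1 - k)%N.
  move=> k k6 H; rewrite -hW in H; apply: (supp_top _ _ H); last by lia.
  by rewrite -/W hW size_comp_poly2 // -sG2.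
have [r2 _] := ML q1.+1 q2.+1 alpha^-1 (- (beta / alpha)) G2 (size G2).-1 htm1 htm2 tcop ai0 sG2 D26 Gz2 Fs2.
have a2p : 0 < alpha ^+ 2 by rewrite lt0r sqr_ge0 andbT expf_neq0.
have a2 : alpha ^+ 2 = 1.
  apply/le_anti; rewrite r1 /=.
  by rewrite exprVn invf_le1 in r2.
have b0 : beta = 0.
  apply/eqP; apply: contraT => bn; have := r1' bn; by rewrite a2 ltxx.
split => //.
move/eqP: a2; rewrite sqrf_eq1 => /orP [] /eqP ->; by [left | right].
Qed.
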